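(* Let $n,r\geq 1$ with $\gcd(n,r)>1$. Then for every $q\geq 1$, $n$ prisoners do not have a symmetric winning strategy in the prisoners-and-rooms game with $r$ rooms and $q$ states, starting with all rooms in state $0$.
   Context: The game: there are $n$ prisoners and $r$ rooms; each room contains a switch that is in one of $q$ states $\{0,1,\ldots,q-1\}$. The initial state of every room is known to the prisoners. A warden leads prisoners into rooms one at a time according to a schedule, i.e. an infinite sequence of (prisoner, room) pairs; a schedule is valid if every prisoner visits every room infinitely often. The rooms are indistinguishable to the prisoners, and prisoners have no information about time or other visits: on each visit a prisoner observes only the current state of the room, may change it to any state, and may declare that all prisoners have visited all rooms. A (deterministic) strategy assigns to each prisoner a rule determining, from the sequence of states that prisoner has observed so far (and their own previous actions), what new state to set and whether to declare. A strategy is winning if for every valid schedule some prisoner eventually declares, and every declaration is made only at a time when every prisoner has already visited every room. A strategy is symmetric if all prisoners follow the same rule (the same function of their own observation history). *)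

(* Defs.v *)
From mathcomp Require Import all_boot.
Set Implicit Arguments. Unset Strict Implicit. Unset Printing Implicit Defensive.

(* A symmetric deterministic strategy: a single rule applied by every prisoner.
   Its argument is the sequence of states the prisoner has observed so far,
   in chronological order, INCLUDING the state observed at the current visit
   (the last element).  Since the strategy is deterministic, the prisoner's own
   previous actions are functions of its earlier observations, so this is no
   loss of generality.  The output is the new state to set and whether to
   declare. *)
Definition sym_strategy (q : nat) := seq 'I_q -> 'I_q * bool.

Definition schedule (n r : nat) := nat -> 'I_n * 'I_r.

Definition valid_schedule n r (sched : schedule n r) : Prop :=
  forall (p : 'I_n) (k : 'I_r) (t : nat), exists t', t <= t' /\ sched t' = (p, k).

(* Configuration BEFORE the visit at time t:
   the current state of every room, and the observation history of every prisoner. *)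
Fixpoint config n r q (init : 'I_r -> 'I_q) (S : sym_strategy q)
    (sched : schedule n r) (t : nat) : ('I_r -> 'I_q) * ('I_n -> seq 'I_q) :=
  match t with
  | 0 => (init, fun _ => [::])
  | t'.+1 =>
      let: (rooms, hists) := config init S sched t' in
      let: (p, k) := sched t' in
      let h := rcons (hists p) (rooms k) in
      let s := (S h).1 in
      (fun k' => if k' == k then s else rooms k',
       fun p' => if p' == p then h else hists p')
  end.

Definition declares n r q (init : 'I_r -> 'I_q) (S : sym_strategy q)
    (sched : schedule n r) (t : nat) : bool :=
  let: (rooms, hists) := config init S sched t in
  let: (p, k) := sched t in
  (S (rcons (hists p) (rooms k))).2.

Definition all_visited n r (sched : schedule n r) (t : nat) : Prop :=
  forall (p : 'I_n) (k : 'I_r), exists t', t' <= t /\ sched t' = (p, k).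

Definition winning n r q (init : 'I_r -> 'I_q) (S : sym_strategy q) : Prop :=
  forall sched : schedule n r, valid_schedule sched ->
    (exists t, declares init S sched t) /\
    (forall t, declares init S sched t -> all_visited sched t).

(* Main.v *)
Require Import Defs.
From mathcomp Require Import all_boot.
Set Implicit Arguments. Unset Strict Implicit.

Lemma slot_inv d s x : s <= d -> ((x %% d + (d - s)) %% d + s) %% d = x %% d.
Proof.
move=> hs; rewrite modnDml -addnA subnK // modnDr modn_mod //.
Qed.

Lemma slot_of d s j : s <= d -> j < d -> (((j + s) %% d) %% d + (d - s)) %% d = j.
Proof.
move=> hs hj; rewrite modn_mod modnDml -addnA subnKC // modnDr modn_small //.
Qed.

Definition sch n1 r1 d (I K Sh : nat -> nat) : schedule n1.+1 r1.+1 :=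
  fun t => (inord (I (t %/ d) * d + t %% d),
            inord (K (t %/ d) * d + (t %% d + Sh (t %/ d)) %% d)).

Fixpoint red q (z : 'I_q) (S : sym_strategy q) (I K : nat -> nat) (b : nat)
  : (nat -> 'I_q) * (nat -> seq 'I_q) :=
  match b with
  | 0 => (fun _ => z, fun _ => [::])
  | b'.+1 =>
     let RH := red z S I K b' in
     let h := rcons (RH.2 (I b')) (RH.1 (K b')) in
     (fun c => if c == K b' then (S h).1 else RH.1 c,
      fun c => if c == I b' then h else RH.2 c)
  end.

Definition hb q (z : 'I_q) S I K b :=
  rcons ((red z S I K b).2 (I b)) ((red z S I K b).1 (K b)).

Lemma cfg_inv n1 r1 q (z : 'I_q) (S : sym_strategy q) d (I K Sh : nat -> nat)
  (hd : 0 < d) (hI : forall b, I b * d + d <= n1.+1)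
  (hK : forall b, K b * d + d <= r1.+1) (hS : forall b, Sh b < d) :
  forall b j, j <= d ->
   (forall k : 'I_r1.+1, (config (fun _ => z) S (sch n1 r1 d I K Sh) (b * d + j)).1 k =
      if (k %/ d == K b) && ((k %% d + (d - Sh b)) %% d < j) then (S (hb z S I K b)).1
      else (red z S I K b).1 (k %/ d)) /\
   (forall p : 'I_n1.+1, (config (fun _ => z) S (sch n1 r1 d I K Sh) (b * d + j)).2 p =
      if (p %/ d == I b) && (p %% d < j) then hb z S I K b
      else (red z S I K b).2 (p %/ d)).
Proof.
have step : forall b j, j < d ->
   (forall k : 'I_r1.+1, (config (fun _ => z) S (sch n1 r1 d I K Sh) (b * d + j)).1 k =
      if (k %/ d == K b) && ((k %% d + (d - Sh b)) %% d < j) then (S (hb z S I K b)).1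
      else (red z S I K b).1 (k %/ d)) /\
   (forall p : 'I_n1.+1, (config (fun _ => z) S (sch n1 r1 d I K Sh) (b * d + j)).2 p =
      if (p %/ d == I b) && (p %% d < j) then hb z S I K b
      else (red z S I K b).2 (p %/ d)) ->
   (forall k : 'I_r1.+1, (config (fun _ => z) S (sch n1 r1 d I K Sh) (b * d + j).+1).1 k =
      if (k %/ d == K b) && ((k %% d + (d - Sh b)) %% d < j.+1) then (S (hb z S I K b)).1
      else (red z S I K b).1 (k %/ d)) /\
   (forall p : 'I_n1.+1, (config (fun _ => z) S (sch n1 r1 d I K Sh) (b * d + j).+1).2 p =
      if (p %/ d == I b) && (p %% d < j.+1) then hb z S I K b
      else (red z S I K b).2 (p %/ d)).
  move=> b j hj [Hr Hp] /=.
  case E: (config _ _ _ (b * d + j)) Hr Hp => [rooms hists] /= Hr Hp.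
  have e1 : (b * d + j) %/ d = b by rewrite divnMDl // divn_small // addn0.
  have e2 : (b * d + j) %% d = j by rewrite modnMDl modn_small.
  rewrite /sch e1 e2.
  set p0 := (inord (I b * d + j) : 'I_n1.+1).
  set k0 := (inord (K b * d + (j + Sh b) %% d) : 'I_r1.+1).
  have vp0 : (p0 : nat) = I b * d + j.
    rewrite inordK //; apply: leq_trans _ (hI b); by rewrite ltn_add2l.
  have vk0 : (k0 : nat) = K b * d + (j + Sh b) %% d.
    rewrite inordK //; apply: leq_trans _ (hK b); by rewrite ltn_add2l ltn_pmod.
  have p0d : p0 %/ d = I b by rewrite vp0 divnMDl // divn_small // addn0.
  have p0m : p0 %% d = j by rewrite vp0 modnMDl modn_small.
  have k0d : k0 %/ d = K b by rewrite vk0 divnMDl // divn_small ?addn0 // ltn_pmod.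
  have k0m : k0 %% d = (j + Sh b) %% d by rewrite vk0 modnMDl modn_mod.
  have k0s : (k0 %% d + (d - Sh b)) %% d = j.
    by have := slot_of (ltnW (hS b)) hj; rewrite modn_mod k0m.
  have hh : rcons (hists p0) (rooms k0) = hb z S I K b.
    by rewrite Hp Hr p0d p0m k0d k0s ltnn !eqxx /=.
  rewrite hh; split.
  - move=> k; case: eqP => [->|ne]; first by rewrite k0d k0s eqxx ltnSn.
    rewrite Hr (ltnS _ j) (leq_eqVlt ((k %% d + (d - Sh b)) %% d)).
    case: (k %/ d =P K b) => //= kd.
    case: eqP => //= ks; exfalso; apply: ne; apply: val_inj.
    rewrite /= vk0 -ks slot_inv ?(ltnW (hS b)) // {1}(divn_eq k d) kd //.
  - move=> p; case: eqP => [->|ne]; first by rewrite p0d p0m eqxx ltnSn.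
    rewrite Hp (ltnS _ j) (leq_eqVlt (p %% d)).
    case: (p %/ d =P I b) => //= pd.
    case: eqP => //= ps; exfalso; apply: ne; apply: val_inj.
    by rewrite /= (divn_eq p d) pd vp0 ps.
have base : forall b,
   (forall k : 'I_r1.+1, (config (fun _ => z) S (sch n1 r1 d I K Sh) (b * d + 0)).1 k =
      if (k %/ d == K b) && ((k %% d + (d - Sh b)) %% d < 0) then (S (hb z S I K b)).1
      else (red z S I K b).1 (k %/ d)) /\
   (forall p : 'I_n1.+1, (config (fun _ => z) S (sch n1 r1 d I K Sh) (b * d + 0)).2 p =
      if (p %/ d == I b) && (p %% d < 0) then hb z S I K b
      else (red z S I K b).2 (p %/ d)).
  elim=> [|b IH]; first by split=> ? /=; rewrite andbF.
  have: forall j, j <= d ->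
   (forall k : 'I_r1.+1, (config (fun _ => z) S (sch n1 r1 d I K Sh) (b * d + j)).1 k =
      if (k %/ d == K b) && ((k %% d + (d - Sh b)) %% d < j) then (S (hb z S I K b)).1
      else (red z S I K b).1 (k %/ d)) /\
   (forall p : 'I_n1.+1, (config (fun _ => z) S (sch n1 r1 d I K Sh) (b * d + j)).2 p =
      if (p %/ d == I b) && (p %% d < j) then hb z S I K b
      else (red z S I K b).2 (p %/ d)).
    elim=> [|j IHj] hj; first exact: IH.
    rewrite addnS; apply: step => //; apply: IHj; exact: ltnW.
  move=> /(_ d (leqnn d)) [Hr Hp].
  rewrite addn0 mulSn addnC; split.
  - move=> k; rewrite Hr andbF ltn_pmod //= andbT /hb.
    by case: eqP.
  - move=> p; rewrite Hp andbF ltn_pmod //= andbT /hb.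
    by case: eqP.
move=> b; elim=> [|j IHj] hj; first exact: base.
rewrite addnS; apply: step => //; apply: IHj; exact: ltnW.
Qed.

Lemma decl_eq n1 r1 q (z : 'I_q) (S : sym_strategy q) d (I K Sh : nat -> nat)
  (hd : 0 < d) (hI : forall b, I b * d + d <= n1.+1)
  (hK : forall b, K b * d + d <= r1.+1) (hS : forall b, Sh b < d) t :
  declares (fun _ => z) S (sch n1 r1 d I K Sh) t = (S (hb z S I K (t %/ d))).2.
Proof.
have ht : t = t %/ d * d + t %% d by apply: divn_eq.
set b := t %/ d in ht *; set j := t %% d in ht *.
have hj : j < d by rewrite /j ltn_pmod.
have [Hr Hp] := @cfg_inv n1 r1 q z S d I K Sh hd hI hK hS b j (ltnW hj).
rewrite -ht in Hr Hp; rewrite /declares.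
case E: (config _ _ _ t) Hr Hp => [rooms hists] /= Hr Hp.
have e1 : t %/ d = b by [].
have e2 : t %% d = j by [].
rewrite /sch e1 e2.
set p0 := (inord (I b * d + j) : 'I_n1.+1).
set k0 := (inord (K b * d + (j + Sh b) %% d) : 'I_r1.+1).
have vp0 : (p0 : nat) = I b * d + j.
  rewrite inordK //; apply: leq_trans _ (hI b); by rewrite ltn_add2l.
have vk0 : (k0 : nat) = K b * d + (j + Sh b) %% d.
  rewrite inordK //; apply: leq_trans _ (hK b); by rewrite ltn_add2l ltn_pmod.
have p0d : p0 %/ d = I b by rewrite vp0 divnMDl // divn_small // addn0.
have p0m : p0 %% d = j by rewrite vp0 modnMDl modn_small.
have k0d : k0 %/ d = K b by rewrite vk0 divnMDl // divn_small ?addn0 // ltn_pmod.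
have k0m : k0 %% d = (j + Sh b) %% d by rewrite vk0 modnMDl modn_mod.
have k0s : (k0 %% d + (d - Sh b)) %% d = j.
  by have := slot_of (ltnW (hS b)) hj; rewrite modn_mod k0m.
have ->: rcons (hists p0) (rooms k0) = hb z S I K b.
  by rewrite Hp Hr p0d p0m k0d k0s ltnn !eqxx /=.
by [].
Qed.

Lemma prefix n r q (init : 'I_r -> 'I_q) (S : sym_strategy q) (s1 s2 : schedule n r) t :
  (forall t', t' < t -> s1 t' = s2 t') -> config init S s1 t = config init S s2 t.
Proof.
elim: t => [|t IH] h //=.
rewrite IH; last by move=> t' ht; apply: h; apply: ltnW.
by rewrite h.
Qed.

Lemma prefix_decl n r q (init : 'I_r -> 'I_q) (S : sym_strategy q) (s1 s2 : schedule n r) t :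
  (forall t', t' <= t -> s1 t' = s2 t') -> declares init S s1 t = declares init S s2 t.
Proof.
move=> h; rewrite /declares (@prefix n r q init S s1 s2); first by rewrite h.
by move=> t' ht; apply: h; apply: ltnW.
Qed.

Theorem mainTheorem6 (n r q : nat) (hn : 1 <= n) (hr : 1 <= r)
    (hgcd : 1 < gcdn n r) (hq : 1 <= q) :
  ~ exists S : sym_strategy q,
      @winning n r q (fun _ : 'I_r => Ordinal hq) S.
Proof.
move=> [S HW].
case: n hn hgcd HW => [|n1] // hn hgcd HW.
case: r hr hgcd HW => [|r1] // hr hgcd HW.
set z := Ordinal hq.
set d := gcdn n1.+1 r1.+1 in hgcd.
have hd : 0 < d by apply: ltnW.
have dn : d %| n1.+1 := dvdn_gcdl n1.+1 r1.+1.
have dr : d %| r1.+1 := dvdn_gcdr n1.+1 r1.+1.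
set m := n1.+1 %/ d. set l := r1.+1 %/ d.
have hnm : n1.+1 = m * d by rewrite /m divnK.
have hrl : r1.+1 = l * d by rewrite /l divnK.
have hm : 0 < m by rewrite /m divn_gt0 // dvdn_leq.
have hl : 0 < l by rewrite /l divn_gt0 // dvdn_leq.
have r2 : 1 < r1.+1 by apply: leq_trans hgcd (dvdn_leq hr dr).
pose I b := b %% m.
pose K b := (b %/ m) %% l.
pose Sh b := (b %/ (m * l)) %% d.
have hI : forall b, I b * d + d <= n1.+1.
  move=> b; rewrite [X in _ <= X]hnm addnC -mulSn leq_mul2r ltn_pmod ?orbT //.
have hK : forall b, K b * d + d <= r1.+1.
  move=> b; rewrite [X in _ <= X]hrl addnC -mulSn leq_mul2r ltn_pmod ?orbT //.
have hS : forall b, Sh b < d by move=> b; rewrite ltn_pmod.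
have hS0 : forall b : nat, (fun _ => 0) b < d by [].
set sig := sch n1 r1 d I K Sh.
set sig0 := sch n1 r1 d I K (fun _ => 0).
have vsig : valid_schedule sig.
  move=> p k T.
  set i0 := p %/ d. set j0 := p %% d. set k0 := k %/ d. set c0 := k %% d.
  set s0 := (c0 + (d - j0)) %% d.
  have hj0 : j0 < d by rewrite ltn_pmod.
  have hs0 : s0 < d by rewrite ltn_pmod.
  have hk0 : k0 < l by rewrite ltn_divLR // -hrl.
  have hi0 : i0 < m by rewrite ltn_divLR // -hnm.
  pose b := ((T * d + s0) * l + k0) * m + i0.
  exists (b * d + j0); split.
    have : T <= b.
      rewrite /b; apply: leq_trans (leq_addr _ _); apply: leq_trans (leq_pmulr _ hm).
      apply: leq_trans (leq_addr _ _); apply: leq_trans (leq_pmulr _ hl).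
      apply: leq_trans (leq_addr _ _); exact: leq_pmulr.
    move=> hb; apply: leq_trans hb _; apply: leq_trans (leq_addr _ _).
    by rewrite leq_pmulr.
  have e1 : (b * d + j0) %/ d = b by rewrite divnMDl // divn_small // addn0.
  have e2 : (b * d + j0) %% d = j0 by rewrite modnMDl modn_small.
  have eI : I b = i0 by rewrite /I /b modnMDl modn_small.
  have eb : b %/ m = (T * d + s0) * l + k0 by rewrite /b divnMDl // divn_small // addn0.
  have eK : K b = k0 by rewrite /K eb modnMDl modn_small.
  have eS : Sh b = s0.
    by rewrite /Sh divnMA eb divnMDl // divn_small // addn0 modnMDl modn_small.
  rewrite /sig /sch e1 e2 eI eK eS; congr pair; apply: val_inj; rewrite /= inordK.
  - by rewrite /i0 /j0 -divn_eq.
  - by rewrite /i0 /j0 -divn_eq.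
  - have -> : (j0 + s0) %% d = c0.
      rewrite /s0 modnDmr.
      have -> : j0 + (c0 + (d - j0)) = c0 + d by rewrite addnCA subnKC // ltnW.
      by rewrite modnDr modn_small // /c0 ltn_pmod.
    by rewrite /k0 /c0 -divn_eq.
  - have -> : (j0 + s0) %% d = c0.
      rewrite /s0 modnDmr.
      have -> : j0 + (c0 + (d - j0)) = c0 + d by rewrite addnCA subnKC // ltnW.
      by rewrite modnDr modn_small // /c0 ltn_pmod.
    by rewrite /k0 /c0 -divn_eq.
have [[t ht] _] := HW sig vsig.
pose sig1 : schedule n1.+1 r1.+1 := fun t' => if t' <= t then sig0 t' else sig t'.
have vsig1 : valid_schedule sig1.
  move=> p k T; have [t'' [h1 h2]] := vsig p k (maxn T t.+1).
  exists t''; split; first by apply: leq_trans h1; rewrite leq_maxl.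
  rewrite /sig1; case: ifP => // h3.
  have : t.+1 <= t'' by apply: leq_trans h1; rewrite leq_maxr.
  by rewrite ltnNge h3.
have d1 : declares (fun _ => z) S sig1 t.
  rewrite (@prefix_decl _ _ _ _ S sig1 sig0 t); last by move=> t' h; rewrite /sig1 h.
  rewrite /sig0 decl_eq //.
  by move: ht; rewrite /sig decl_eq.
have [_ HW2] := HW sig1 vsig1.
have [t' [h1 h2]] := HW2 t d1 ord0 (inord 1).
move: h2; rewrite /sig1 h1 /sig0 /sch => [[h3 h4]].
have e3 := congr1 (@nat_of_ord _) h3.
have e4 := congr1 (@nat_of_ord _) h4.
rewrite /= !inordK // in e3 e4.
- have j0 : t' %% d = 0 by move/eqP: e3; rewrite addn_eq0 => /andP[_ /eqP].
  move: e4; rewrite j0 add0n mod0n addn0 => /(congr1 (modn^~ d)).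
  by rewrite modnMl modn_small.
- by apply: leq_trans _ (hK (t' %/ d)); rewrite ltn_add2l ltn_pmod.
- by apply: leq_trans _ (hI (t' %/ d)); rewrite ltn_add2l ltn_pmod.
Qed.
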